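(* Let $\langle A,\to\rangle$ be a conditional algebra. Then $\langle A,\to\rangle$ is a pseudo-subordination algebra (i.e., additionally satisfies $0\to a=1$ and $(a\to c)\wedge(b\to c)\le(a\vee b)\to c$ for all $a,b,c$) if and only if $T_A$ satisfies: for all ultrafilters $u,v$ and all $Y$, if $T_A(u,Y,v)$ then there exists $w\in Y$ such that $T_A(u,\{w\},v)$.
   Context: A conditional algebra is $\langle A,\to\rangle$ with $A$ a Boolean algebra and $\to$ binary with $a\to1=1$, $(a\to b)\wedge(a\to c)=a\to(b\wedge c)$, $(a\vee b)\to c\le(a\to c)\wedge(b\to c)$. Filters include the improper filter $A$; for a filter $F$, $\varphi(F)=\{u\in\mathrm{Ul}(A):F\subseteq u\}$ (so $\varphi(A)=\emptyset$). $D^{\to}_u(F)=\{b:\exists a\in F,\ a\to b\in u\}$; $T_A(u,Z,v)$ iff there is a filter $F$ with $Z=\varphi(F)$ and $D^{\to}_u(F)\subseteq v$. *)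

(* Defs.v *)
From HB Require Import structures.
From mathcomp Require Import all_boot all_order.
From mathcomp Require Import boolp classical_sets.
Set Implicit Arguments. Unset Strict Implicit. Unset Printing Implicit Defensive.
Import Order.TTheory.

Section ConditionalAlgebras.
Context {disp : Order.disp_t} {A : ctbDistrLatticeType disp}.

Local Open Scope order_scope.

Definition conditional_algebra (imp : A -> A -> A) : Prop :=
  (forall a, imp a \top = \top) /\
  (forall a b c, Order.meet (imp a b) (imp a c) = imp a (Order.meet b c)) /\
  (forall a b c, imp (Order.join a b) c <= Order.meet (imp a c) (imp b c)).

Definition pseudo_subordination_algebra (imp : A -> A -> A) : Prop :=
  conditional_algebra imp /\
  (forall a, imp \bot a = \top) /\
  (forall a b c, Order.meet (imp a c) (imp b c) <= imp (Order.join a b) c).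

(* Filters (the improper filter A itself included). *)
Definition is_filter (F : set A) : Prop :=
  F \top /\
  (forall a b, F a -> a <= b -> F b) /\
  (forall a b, F a -> F b -> F (Order.meet a b)).

Definition proper_filter (F : set A) : Prop := is_filter F /\ ~ F \bot.

Definition ultrafilter (u : set A) : Prop :=
  proper_filter u /\
  (forall G : set A, proper_filter G -> (u `<=` G)%classic -> G = u).

Definition phi (F : set A) : set (set A) :=
  [set u | ultrafilter u /\ (F `<=` u)%classic].

Definition Dimp (imp : A -> A -> A) (u F : set A) : set A :=
  [set b | exists2 a, F a & u (imp a b)].

Definition TA (imp : A -> A -> A) (u : set A) (Z : set (set A)) (v : set A)
  : Prop :=
  exists F : set A, [/\ is_filter F, Z = phi F & (Dimp imp u F `<=` v)%classic].

End ConditionalAlgebras.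

(* Main.v *)
Require Import Defs.
From HB Require Import structures.
From mathcomp Require Import all_boot all_order.
From mathcomp Require Import boolp classical_sets.
Set Implicit Arguments. Unset Strict Implicit. Unset Printing Implicit Defensive.
Import Order.Theory.

Section Aux.
Context {disp : Order.disp_t} {A : ctbDistrLatticeType disp}.
Local Open Scope order_scope.

Definition is_ideal (I : set A) : Prop :=
  I \bot /\ (forall a b, I b -> a <= b -> I a) /\
  (forall a b, I a -> I b -> I (a `|` b)).

Lemma ext_ultra (F I : set A) : is_filter F -> is_ideal I ->
  (forall x, F x -> ~ I x) ->
  exists w, [/\ ultrafilter w, (F `<=` w)%classic & forall x, w x -> ~ I x].
Proof.
move=> [FT [Fup FI]] [I0 [Idown IU]] FnI.
pose P (X : set A) := [/\ (forall a b, X a -> a <= b -> X b),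
   (forall a b, X a -> X b -> X (a `&` b)),
   (forall x, X x -> ~ I x) & ((X !=set0)%classic -> (F `<=` X)%classic)].
have [M [[Mup MI MnI MF] maxM]] : exists M, P M /\ forall B, (M `<` B)%classic -> ~ P B.
  apply: Zorn_bigcup => C CP Ctot; split.
  - move=> a b [X CX Xa] ab; exists X => //; have [+ _ _ _] := CP X CX; apply; eauto.
  - move=> a b [X CX Xa] [Y CY Yb].
    have [XY|YX] := Ctot X Y CX CY.
    + exists Y => //; have [_ + _ _] := CP Y CY; apply => //; exact: XY.
    + exists X => //; have [_ + _ _] := CP X CX; apply => //; exact: YX.
  - move=> x [X CX Xx]; have [_ _ + _] := CP X CX; apply; eauto.
  - move=> [y [X CX Xy]] z Fz; exists X => //; have [_ _ _ +] := CP X CX; apply => //.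
    by exists y.
have FM : (F `<=` M)%classic.
  apply: MF; apply/set0P/eqP => M0; apply: (maxM F).
    split; first by rewrite M0.
    by move=> FsubM; have := FsubM _ FT; rewrite M0.
  split => //; eauto. by move=> _.
have MT : M \top by exact: FM.
have key : forall g, ~ M g -> exists2 m, M m & I (m `&` g).
  move=> g Mg; case: (pselect (exists2 m, M m & I (m `&` g))) => // nH; exfalso.
  pose Mgs : set A := fun y => exists2 m, M m & m `&` g <= y.
  apply: (maxM Mgs).
    split; first by move=> y My; exists y => //; exact: leIl.
    by move=> MgM; apply: Mg; apply: MgM; exists \top => //; rewrite meet1x.
  split.
  - move=> a b [m Mm ma] ab; exists m => //; exact: le_trans ab.
  - move=> a b [m1 Mm1 h1] [m2 Mm2 h2]; exists (m1 `&` m2); first exact: MI.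
    rewrite lexI; apply/andP; split.
      apply: le_trans h1; apply: leI2 => //; exact: leIl.
    apply: le_trans h2; apply: leI2 => //; exact: leIr.
  - move=> y [m Mm h] Iy; apply: nH; exists m => //; exact: Idown h.
  - move=> _ x Fx; exists x; [exact: FM | exact: leIl].
exists M; split => //; split.
- split; first by split.
  by move=> M0; exact: MnI M0 I0.
- move=> G [[GT [Gup GI]] G0] MG; apply/seteqP; split => // g Gg.
  apply: contrapT => Mg; have [m1 Mm1 I1] := key g Mg.
  have [Mc|Mc] := pselect (M (~` g)).
    by apply: G0; rewrite -(meetxC g); apply: GI => //; exact: MG.
  have [m2 Mm2 I2] := key _ Mc.
  apply: (MnI (m1 `&` m2)); first exact: MI.
  apply: Idown (IU _ _ I1 I2) _.
  rewrite -[m1 `&` m2]meetx1 -(joinxC g) meetUr; apply: leU2.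
    by apply: leI2 => //; exact: leIl.
  by apply: leI2 => //; exact: leIr.
Qed.


Lemma up_filter (x : A) : is_filter (fun y => x <= y).
Proof.
split; first exact: lex1.
split; first by move=> a b xa ab; exact: le_trans ab.
by move=> a b xa xb; rewrite lexI xa xb.
Qed.

Lemma down_ideal (x : A) : is_ideal (fun y => y <= x).
Proof.
split; first exact: le0x.
split; first by move=> a b bx ab; exact: le_trans bx.
by move=> a b ax bx; rewrite leUx ax bx.
Qed.

Lemma ultra_phi (w : set A) : ultrafilter w -> phi w = set1 w.
Proof.
move=> uw; apply/seteqP; split => z.
  by move=> [[pz _] wz]; have [_ mx] := uw; exact: mx.
by move=> ->; split.
Qed.

Lemma ultra_notin (w : set A) x : ultrafilter w -> ~ w x ->
  exists2 z, w z & z `&` x <= \bot.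
Proof.
move=> [[[wT [wup wI]] w0] wmax] wx.
pose G : set A := fun y => exists2 z, w z & z `&` x <= y.
case: (pselect (G \bot)) => [//|G0]; exfalso.
have GF : is_filter G.
  split; first by exists \top => //; exact: lex1.
  split; first by move=> a b [z wz h] ab; exists z => //; exact: le_trans ab.
  move=> a b [z1 w1 h1] [z2 w2 h2]; exists (z1 `&` z2); first exact: wI.
  rewrite lexI; apply/andP; split.
    apply: le_trans h1; apply: leI2 => //; exact: leIl.
  apply: le_trans h2; apply: leI2 => //; exact: leIr.
have wG : (w `<=` G)%classic by move=> y wy; exists y => //; exact: leIl.
have := wmax G (conj GF G0) wG => GE.
apply: wx; have : G x by exists \top => //; rewrite meet1x.
by rewrite GE.
Qed.

Lemma ultra_prime (w : set A) a b : ultrafilter w -> w (a `|` b) -> w a \/ w b.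
Proof.
move=> uw wab; apply: contrapT => /not_orP [na nb].
have [z1 w1 h1] := ultra_notin uw na.
have [z2 w2 h2] := ultra_notin uw nb.
have [[[_ [wup wI]] w0] _] := uw; apply: w0.
apply: (wup ((z1 `&` z2) `&` (a `|` b))); first by apply: (wI) => //; exact: wI.
rewrite meetUr leUx; apply/andP; split.
  apply: le_trans h1; apply: leI2 => //; exact: leIl.
apply: le_trans h2; apply: leI2 => //; exact: leIr.
Qed.

Lemma ultra_top x : (forall w : set A, ultrafilter w -> w x) -> x = \top.
Proof.
move=> H; apply: contrapT => xT.
have disj : forall y, \top <= y -> ~ y <= x.
  move=> y; rewrite le1x => /eqP -> h; apply: xT; apply/eqP; rewrite eq_le h lex1 //.
have [w [uw _ wI]] := ext_ultra (up_filter \top) (down_ideal x) disj.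
by apply: (wI _ (H w uw)).
Qed.

Section Imp.
Variable imp : A -> A -> A.
Hypothesis CA : conditional_algebra imp.

Lemma imp_mono a b c : b <= c -> imp a b <= imp a c.
Proof.
have [_ [H2 _]] := CA => bc; rewrite -(meet_l bc) -H2; exact: leIr.
Qed.

Lemma imp_anti a b c : a <= b -> imp b c <= imp a c.
Proof.
have [_ [_ H3]] := CA => ab; rewrite -(join_r ab).
apply: le_trans (H3 _ _ _) _; exact: leIl.
Qed.

Lemma Dimp_filter (u F : set A) : is_filter u -> is_filter F -> is_filter (Dimp imp u F).
Proof.
move=> [uT [uup uI]] [FT [Fup FI]]; have [H1 [H2 _]] := CA.
split; first by exists \top => //; rewrite H1.
split.
  move=> a b [c Fc uc] ab; exists c => //; apply: uup uc _; exact: imp_mono.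
move=> a b [c1 F1 u1] [c2 F2 u2]; exists (c1 `&` c2); first exact: FI.
rewrite -H2; apply: uI.
  apply: uup u1 _; apply: imp_anti; exact: leIl.
apply: uup u2 _; apply: imp_anti; exact: leIr.
Qed.

End Imp.
End Aux.

Theorem theorem9p4 (disp : Order.disp_t) (A : ctbDistrLatticeType disp)
    (imp : A -> A -> A) :
  conditional_algebra imp ->
  (pseudo_subordination_algebra imp <->
   (forall (u v : set A) (Y : set (set A)),
      ultrafilter u -> ultrafilter v -> TA imp u Y v ->
      exists2 w, Y w & TA imp u [set w] v)).
Proof.
Local Open Scope order_scope.
move=> CA; split.
- move=> [_ [H0 Hj]] u v Y uu uv [F [Ff YE Dsub]].
  have [[[uT [uup uI]] u0] _] := uu.
  have [[[vT [vup vI]] v0] _] := uv.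
  pose I : set A := fun a => exists2 b, ~ v b & u (imp a b).
  have II : is_ideal I.
    split; first by exists \bot => //; rewrite H0.
    split; first by move=> a b [c vc uc] ab; exists c => //; apply: uup uc _; exact: imp_anti.
    move=> a1 a2 [b1 v1 u1] [b2 v2 u2]; exists (b1 `|` b2).
      by move=> /(ultra_prime uv) [].
    apply: (uup _ _ _ (Hj _ _ _)); apply: uI.
      apply: uup u1 _; apply: imp_mono => //; exact: leUl.
    apply: uup u2 _; apply: imp_mono => //; exact: leUr.
  have FI : forall x, F x -> ~ I x.
    by move=> x Fx [b vb ub]; apply: vb; apply: Dsub; exists x.
  have [w [uw Fw wI]] := ext_ultra Ff II FI.
  exists w; first by rewrite YE; split.
  exists w; split.
  + by have [[]] := uw.
  + by rewrite ultra_phi.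
  + move=> b [a wa ua]; apply: contrapT => vb; apply: (wI a wa); by exists b.
- move=> Hc.
  have H0 : forall a, imp \bot a = \top.
    have H00 : imp \bot \bot = \top.
      apply: ultra_top => u uu; apply: contrapT => nu.
      have Df := Dimp_filter CA (proj1 (proj1 uu)) (_ : is_filter setT).
      have Tf : is_filter (@setT A) by [].
      have disj : forall x, Dimp imp u setT x -> ~ x <= \bot.
        move=> x [a _ ua] x0; apply: nu; have [[[_ [uup _]] _] _] := uu.
        apply: uup ua _; apply: le_trans (imp_mono CA _ x0) _.
        exact: (imp_anti CA \bot (le0x a)).
      have [v [uv Dv _]] : exists v, [/\ ultrafilter v, (Dimp imp u setT `<=` v)%classic & forall x, v x -> ~ x <= \bot].
        exact: ext_ultra (Df Tf) (down_ideal \bot) disj.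
      have [w [[[[_ [_ _]] w0] _] Tw] _] := Hc u v (phi setT) uu uv
        (ex_intro _ setT (And3 Tf erefl Dv)).
      exact: w0 (Tw _ I).
    move=> a; apply/eqP; rewrite -le1x -H00; exact: (imp_mono CA \bot (le0x a)).
  split => //; split => // a b c.
  apply: contrapT => N.
  set x := Order.meet (imp a c) (imp b c); set y := imp (Order.join a b) c.
  have disj : forall z, x <= z -> ~ z <= y.
    by move=> z xz zy; apply: N; exact: le_trans zy.
  have [u [uu xu uy]] := ext_ultra (up_filter x) (down_ideal y) disj.
  have ux : u x by exact: xu.
  have [[[uT [uup uI]] u0] _] := uu.
  pose F : set A := fun z => Order.join a b <= z.
  have Ff : is_filter F := up_filter _.
  have Df := Dimp_filter CA (proj1 (proj1 uu)) Ff.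
  have disj2 : forall d, Dimp imp u F d -> ~ d <= c.
    move=> d [a' Fa' ua'] dc; apply: (uy y) => //; apply: uup ua' _.
    apply: le_trans (imp_anti CA _ Fa') _; exact: (imp_mono CA (Order.join a b) dc).
  have [v [uv Dv vI]] := ext_ultra Df (down_ideal c) disj2.
  have [w [uw Fw] [G [Gf GE DG]]] := Hc u v (phi F) uu uv (ex_intro _ F (And3 Ff erefl Dv)).
  have wG : (w `<=` G)%classic.
    move=> x' wx'; apply: contrapT => Gx'.
    have disj3 : forall z, G z -> ~ z <= x'.
      by move=> z Gz zx; apply: Gx'; have [_ [Gup _]] := Gf; exact: Gup Gz zx.
    have [w' [uw' Gw' wI']] := ext_ultra Gf (down_ideal x') disj3.
    have : phi G w' by split.
    rewrite -GE => ww; rewrite /set1 /= in ww; subst w'.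
    exact: wI' wx' (lexx _).
  have wab : w (Order.join a b) by apply: Fw; rewrite /F lexx.
  have Dc : forall e, w e -> u (imp e c) -> False.
    by move=> e we ue; apply: (vI c) => //; apply: DG; exists e => //; exact: wG.
  case: (ultra_prime uw wab) => [wa|wb].
    by apply: (Dc a wa); apply: uup ux _; exact: leIl.
  by apply: (Dc b wb); apply: uup ux _; exact: leIr.
Qed.
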